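(* Let $(X,\mathrm{dist})$ be a metric space, $P\subset X$ finite, $\varepsilon\ge0$, and suppose $G$ is a bipartite Steiner $(1+\varepsilon)$-spanner for $P$ with $|E|$ edges. Then there is a $(2+2\varepsilon)$-spanner for $P$ (a geometric graph with vertex set exactly $P$) with at most $|E|$ edges.
   Context: A geometric graph on a finite subset $V$ of $X$ has each edge $uv$ weighted by $\mathrm{dist}(u,v)$; $\mathrm{dist}_G$ denotes shortest-path length. A Steiner $t$-spanner for $P$ is a geometric graph $G$ on $P\cup S$ for a finite $S\subset X\setminus P$ with $\mathrm{dist}_G(u,v)\le t\,\mathrm{dist}(u,v)$ for all $u,v\in P$; it is bipartite if every edge joins a point of $P$ to a point of $S$. A $t$-spanner is a Steiner $t$-spanner with $S=\emptyset$. *)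

(* Defs.v *)
From HB Require Import structures.
From mathcomp Require Import all_boot all_order all_algebra.
From mathcomp Require Import finmap.
From mathcomp Require Import reals.
Set Implicit Arguments. Unset Strict Implicit. Unset Printing Implicit Defensive.
Import Order.TTheory GRing.Theory Num.Theory.
Local Open Scope ring_scope.

Definition is_metric (R : realType) (X : Type) (d : X -> X -> R) : Prop :=
  (forall x y, 0 <= d x y) /\
  (forall x y, d x y = 0 <-> x = y) /\
  (forall x y, d x y = d y x) /\
  (forall x y z, d x z <= d x y + d y z).

Local Open Scope fset_scope.
Local Open Scope ring_scope.

(* A geometric graph with vertex set V and edge set E: every edge is a
   2-element subset of V (undirected, no loops); the weight of the edge
   {u,v} is d u v. *)
Definition geometric_graph (X : choiceType) (V : {fset X}) (E : {fset {fset X}}) : Prop :=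
  forall e, e \in E -> #|` e| = 2%N /\ e `<=` V.

Definition adj (X : choiceType) (E : {fset {fset X}}) : rel X :=
  fun a b => [fset a; b] \in E.

Definition walk_len (R : realType) (X : choiceType) (d : X -> X -> R) (u : X) (s : seq X) : R :=
  \sum_(p <- zip (u :: s) s) d p.1 p.2.

(* dist_G(u,v) <= b : some walk from u to v in G has length <= b
   (dist_G is the minimum over the finitely many simple paths). *)
Definition distG_le (R : realType) (X : choiceType) (d : X -> X -> R)
    (E : {fset {fset X}}) (u v : X) (b : R) : Prop :=
  exists s : seq X, path (adj E) u s /\ last u s = v /\ walk_len d u s <= b.

Definition steiner_spanner (R : realType) (X : choiceType) (d : X -> X -> R)
    (P S : {fset X}) (E : {fset {fset X}}) (t : R) : Prop :=
  [disjoint P & S] /\ geometric_graph (P `|` S) E /\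
  (forall u v, u \in P -> v \in P -> distG_le d E u v (t * d u v)).

Definition bipartite_PS (X : choiceType) (P S : {fset X}) (E : {fset {fset X}}) : Prop :=
  forall e, e \in E -> exists p s, p \in P /\ s \in S /\ e = [fset p; s].

Definition spanner (R : realType) (X : choiceType) (d : X -> X -> R)
    (P : {fset X}) (E : {fset {fset X}}) (t : R) : Prop :=
  steiner_spanner d P fset0 E t.

(* Main.v *)
Require Import Defs.
From HB Require Import structures.
From mathcomp Require Import all_boot all_order all_algebra.
From mathcomp Require Import finmap.
From mathcomp Require Import reals.
From Stdlib Require Import Classical ClassicalEpsilon.
Import Order.TTheory GRing.Theory Num.Theory.
Local Open Scope ring_scope.
Set Implicit Arguments. Unset Strict Implicit.
Local Open Scope fset_scope.
Local Open Scope ring_scope.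

Lemma walk_len_cons (R : realType) (X : choiceType) (d : X -> X -> R) u x s :
  walk_len d u (x :: s) = d u x + walk_len d x s.
Proof. by rewrite /walk_len /= big_cons. Qed.

Lemma walk_len_cat (R : realType) (X : choiceType) (d : X -> X -> R) u s1 s2 :
  walk_len d u (s1 ++ s2) = walk_len d u s1 + walk_len d (last u s1) s2.
Proof.
elim: s1 u => [|x s1 IH] u /=.
  by rewrite /walk_len /= big_nil add0r.
by rewrite !walk_len_cons IH addrA.
Qed.

Definition hop (X : choiceType) (a b : X) : seq X := if a == b then [::] else [:: b].

Lemma last_hop (X : choiceType) (a b : X) : last a (hop a b) = b.
Proof. by rewrite /hop; case: eqP. Qed.

Lemma len_hop (R : realType) (X : choiceType) (d : X -> X -> R) a b :
  d a a = 0 -> walk_len d a (hop a b) = d a b.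
Proof.
move=> H0; rewrite /hop; case: eqP => [<-|_].
  by rewrite /walk_len big_nil H0.
by rewrite walk_len_cons /walk_len big_nil addr0.
Qed.

Lemma path_hop (X : choiceType) (e : rel X) a b :
  (a != b -> e a b) -> path e a (hop a b).
Proof. move=> H; rewrite /hop; case: eqP => //= /eqP /H ->; done. Qed.

Lemma seq_min (R : realType) (X : eqType) (f : X -> R) (l : seq X) :
  l != [::] -> exists2 x, x \in l & forall z, z \in l -> f x <= f z.
Proof.
elim: l => [|a l IH] // _.
case: (altP (l =P [::])) => [->|/IH [x xl Hx]].
  by exists a; rewrite ?mem_head // => z; rewrite inE => /eqP ->.
case: (leP (f a) (f x)) => H.
  exists a; first exact: mem_head.
  by move=> z; rewrite inE => /orP [/eqP ->//|/Hx]; apply: le_trans.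
exists x; first by rewrite inE xl orbT.
by move=> z; rewrite inE => /orP [/eqP ->|/Hx //]; apply: ltW.
Qed.

Lemma conv_walk (R : realType) (X : choiceType) (d : X -> X -> R)
   (P : {fset X}) (E E' : {fset {fset X}}) (ps : X -> X) :
  (forall a, d a a = 0) -> (forall a b, d a b = d b a) ->
  (forall a b c, d a c <= d a b + d b c) ->
  (forall a b, adj E a b -> adj E b a) ->
  (forall a b, adj E' a b -> adj E' b a) ->
  (forall x y, x \in P -> adj E x y -> y \notin P) ->
  (forall y z, y \notin P -> adj E y z -> z \in P) ->
  (forall x y, x \in P -> adj E x y -> [/\ ps y \in P, (x != ps y -> adj E' x (ps y))
        & d y (ps y) <= d y x]) ->
  forall n s u, (size s <= n)%N -> u \in P -> path (adj E) u s -> last u s \in P ->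
  exists s', [/\ path (adj E') u s', last u s' = last u s &
                 walk_len d u s' <= 2 * walk_len d u s].
Proof.
move=> d0 dC dT sE sE' HPS HSP Hps.
elim=> [|n IH] [|y [|z t]] u //= Hs uP.
- by move=> _ _; exists [::]; rewrite /walk_len big_nil mulr0.
- by move=> _ _; exists [::]; rewrite /walk_len big_nil mulr0.
- by move=> /andP [Huy _] yP; move: (HPS _ _ uP Huy); rewrite yP.
- move=> /andP [Huy /andP [Hyz Ht]] Hl.
  have yP := HPS _ _ uP Huy.
  have zP := HSP _ _ yP Hyz.
  have [t' [Pt' Lt' Wt']] := IH t z (ltnW Hs) zP Ht Hl.
  have [pP Hup Hdu] := Hps _ _ uP Huy.
  have [_ Hzp Hdz] := Hps _ _ zP (sE _ _ Hyz).
  exists (hop u (ps y) ++ hop (ps y) z ++ t'); split.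
  + rewrite cat_path last_hop cat_path last_hop Pt' andbT.
    apply/andP; split; apply: path_hop => // H.
    by apply: sE'; apply: Hzp; rewrite eq_sym.
  + by rewrite !last_cat !last_hop.
  + rewrite !walk_len_cat !last_hop !len_hop // !walk_len_cons.
    have h1 : d u (ps y) <= 2 * d u y.
      apply: (le_trans (dT _ y _)).
      by rewrite mulr2n mulrDl mul1r lerD2l (dC u y).
    have h2 : d (ps y) z <= 2 * d y z.
      apply: (le_trans (dT _ y _)).
      by rewrite mulr2n mulrDl mul1r lerD2r (dC (ps y) y).
    idtac.
    by rewrite !mulrDr; apply: lerD => //; apply: lerD.
Qed.

Theorem mainTheorem7 (R : realType) (X : choiceType) (d : X -> X -> R)
    (P S : {fset X}) (E : {fset {fset X}}) (eps : R) :
  is_metric d -> 0 <= eps ->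
  steiner_spanner d P S E (1 + eps) -> bipartite_PS P S E ->
  exists E' : {fset {fset X}},
    spanner d P E' (2 + 2 * eps) /\ (#|` E'| <= #|` E|)%N.
Proof.
move=> [_ [deq [dC dT]]] eps0 [disj [gg span]] bip.
have d0 : forall a, d a a = 0 by move=> a; apply/(deq a a).
have [P0|[x0 x0P]] := fset_0Vmem P.
  exists fset0; split; last by rewrite cardfs0.
  split; first exact: fdisjointX0.
  split; first by move=> e; rewrite inE.
  by move=> u v; rewrite P0 inE.
have Hpese : forall e, exists ab : X * X,
    e \in E -> [/\ ab.1 \in P, ab.2 \in S & e = [fset ab.1; ab.2]].
  move=> e; case: (boolP (e \in E)) => He; last by exists (x0, x0).
  by have [p [s [pP [sS ->]]]] := bip e He; exists (p, s).
pose pe e := (proj1_sig (constructive_indefinite_description _ (Hpese e))).1.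
pose se e := (proj1_sig (constructive_indefinite_description _ (Hpese e))).2.
have Hpe : forall e, e \in E -> [/\ pe e \in P, se e \in S & e = [fset pe e; se e]].
  by move=> e; exact: (proj2_sig (constructive_indefinite_description _ (Hpese e))).
have nPS : forall x, x \in P -> x \in S -> False.
  by move=> x xP xS; move: (fdisjointP disj x xP); rewrite xS.
have Hdec : forall x y, x \in P -> adj E x y ->
    [/\ y \in S, pe [fset x; y] = x & se [fset x; y] = y].
  move=> x y xP Hxy; have [pP sS ee] := Hpe _ Hxy.
  have : x \in [fset pe [fset x; y]; se [fset x; y]] by rewrite -ee fset21.
  case/fset2P => [Hx|Hx]; last by rewrite -Hx in sS; case: (nPS _ xP sS).
  have : se [fset x; y] \in [fset x; y] by rewrite {2}ee fset22.
  case/fset2P => Hs; first by rewrite Hs in sS; case: (nPS _ xP sS).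
  split; [by move: sS; rewrite Hs | by symmetry | by []].
have HPS : forall x y, x \in P -> adj E x y -> y \notin P.
  move=> x y xP Hxy; have [yS _ _] := Hdec _ _ xP Hxy.
  by apply/negP => yP; apply: (nPS _ yP yS).
have HSP : forall y z, y \notin P -> adj E y z -> z \in P.
  move=> y z yP Hyz; have [pP _ ee] := Hpe _ Hyz.
  have : pe [fset y; z] \in [fset y; z] by rewrite {2}ee fset21.
  by case/fset2P => H; [rewrite -H pP in yP | rewrite -H].
have Hnn : forall y, exists p, (exists x, x \in P /\ adj E x y) ->
    [/\ p \in P, adj E p y & forall x, x \in P -> adj E x y -> d y p <= d y x].
  move=> y; case: (classic (exists x, x \in P /\ adj E x y)); last first.
    by move=> H; exists x0 => /H.
  move=> [x [xP Hxy]].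
  have [|p] := @seq_min R X (d y) [seq z <- enum_fset P | adj E z y].
    by apply/eqP => H; have : x \in [::] by rewrite -H mem_filter Hxy.
  rewrite mem_filter => /andP [Hpy pP] Hmin; exists p => _; split => //.
  by move=> z zP Hzy; apply: Hmin; rewrite mem_filter Hzy.
pose ps y := proj1_sig (constructive_indefinite_description _ (Hnn y)).
have Hps0 : forall x y, x \in P -> adj E x y ->
    [/\ ps y \in P, adj E (ps y) y & forall z, z \in P -> adj E z y -> d y (ps y) <= d y z].
  move=> x y xP Hxy.
  exact: (proj2_sig (constructive_indefinite_description _ (Hnn y)) (ex_intro _ x (conj xP Hxy))).
pose E' := [fset e in [fset [fset pe e; ps (se e)] | e in E] | #|` e| == 2%N].
exists E'; split; last first.
  have H1 : (#|` E'| <= #|` [fset [fset pe e; ps (se e)] | e in E]|)%N.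
    by apply: fsubset_leq_card; apply/fsubsetP => e; rewrite inE => /andP [].
  apply: leq_trans H1 _; exact: leq_imfset_card.
have sE : forall a b, adj E a b -> adj E b a by move=> a b; rewrite /adj fsetUC.
have sE' : forall a b, adj E' a b -> adj E' b a by move=> a b; rewrite /adj fsetUC.
have Hps : forall x y, x \in P -> adj E x y -> [/\ ps y \in P, (x != ps y -> adj E' x (ps y))
        & d y (ps y) <= d y x].
  move=> x y xP Hxy; have [pP _ Hm] := Hps0 _ _ xP Hxy.
  split => //; last exact: Hm.
  move=> Hne; rewrite /adj /E' in_fset /= inE /= cardfs2 Hne eqxx andbT.
  have [_ Hp Hs] := Hdec _ _ xP Hxy.
  by apply/imfsetP; exists [fset x; y] => //; rewrite Hp Hs.
split; first exact: fdisjointX0.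
split.
  move=> e; rewrite inE => /andP [He /eqP c2]; split => //.
  case/imfsetP: He => e0 He0 ->.
  have [pP sS ee] := Hpe _ He0.
  have Ha : adj E (pe e0) (se e0) by rewrite /adj -ee.
  have [psP _ _] := Hps0 _ _ pP Ha.
  by apply/fsubsetP => z; rewrite in_fset2 => /orP [] /eqP ->; rewrite in_fsetU ?pP ?psP.
move=> u v uP vP.
have [s [Ps [Ls Ws]]] := span u v uP vP.
have Lv : last u s \in P by rewrite Ls.
have [s' [Ps' Ls' Ws']] := conv_walk d0 dC dT sE sE' HPS HSP Hps (leqnn (size s)) uP Ps Lv.
exists s'; split => //; split; first by rewrite Ls' Ls.
apply: (le_trans Ws'); rewrite (_ : 2 + 2 * eps = 2 * (1 + eps)); last first.
  by rewrite mulrDr mulr1.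
by rewrite -mulrA ler_pM2l.
Qed.
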